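(* Let $d(n)$ be the number of cubes of $\mathbb{T}$ ending at position $n$. For $m\ge7$ let $\Gamma_{m,1}$ be the integer interval (increasing vector) $[\frac{t_{m}+t_{m-2}-1}{2},\dots,\frac{t_{m+1}+t_{m-1}-3}{2}]$, and for a vector $V=[v_1,\dots,v_r]$ write $d(V)=[d(v_1),\dots,d(v_r)]$. Then $d(n)=0$ for $n\leq51$, and \begin{align*} d(\Gamma_{7,1})&=d([52,\dots,95])=[\underbrace{0,\dots,0}_6,1,\underbrace{0,\dots,0}_{37}];\\ d(\Gamma_{8,1})&=d([96,\dots,176])=[\underbrace{0,\dots,0}_{11},1,1,\underbrace{0,\dots,0}_{30},1,\underbrace{0,\dots,0}_{37}];\\ d(\Gamma_{9,1})&=d([177,\dots,325])=[\underbrace{0,\dots,0}_{20},\underbrace{1,\dots,1}_4,\underbrace{0,\dots,0}_{6},1,\underbrace{0,\dots,0}_{48},1,1,\underbrace{0,\dots,0}_{30},1,\underbrace{0,\dots,0}_{37}]; \end{align*} and for $m\geq10$ (juxtaposition denoting concatenation of vectors and $+$ coordinatewise addition) $$d(\Gamma_{m,1})=[d(\Gamma_{m-3,1}),d(\Gamma_{m-2,1}),d(\Gamma_{m-1,1})]+[\underbrace{0,\dots,0,}_{\frac{-t_{m-2}+5t_{m-4}+1}{2}}\underbrace{1,\dots,1,}_{\frac{t_{m-2}-3t_{m-4}-1}{2}}\underbrace{0,\dots,0}_{t_{m-2}+t_{m-3}}].$$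
   Context: The Tribonacci sequence $\mathbb{T}=x_1x_2x_3\cdots$ is the fixed point (infinite word starting with $a$) of the substitution $\sigma(a)=ab$, $\sigma(b)=ac$, $\sigma(c)=a$ over $\{a,b,c\}$. The Tribonacci numbers are $t_m=|\sigma^m(a)|$ for $m\ge0$, with $t_{-2}=0$, $t_{-1}=1$; thus $t_0=1,t_1=2,t_2=4$ and $t_m=t_{m-1}+t_{m-2}+t_{m-3}$. For a nonempty factor $\omega$ of $\mathbb{T}$ and $p\ge1$, $\omega_p$ denotes the $p$-th occurrence of $\omega$ in $\mathbb{T}$ (occurrences ordered by starting position). A cube is a pair $(\omega,p)$ such that $\omega_{p+1}$ begins immediately after $\omega_p$ ends and $\omega_{p+2}$ begins immediately after $\omega_{p+1}$ ends (i.e. $\omega_p\omega_{p+1}\omega_{p+2}$ is a factor of $\mathbb{T}$); it ends at position $n$ if the last letter of $\omega_{p+2}$ is at position $n$. Thus $d(n)=\#\{(\omega,p):\omega_p\omega_{p+1}\omega_{p+2}\text{ ends at position }n\}$. *)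

(* Defs.v *)
From mathcomp Require Import all_boot.
Set Implicit Arguments. Unset Strict Implicit. Unset Printing Implicit Defensive.

(* Letters: a = 0, b = 1, c = 2. *)
Definition sigma_letter (x : nat) : seq nat :=
  match x with 0 => [:: 0; 1] | 1 => [:: 0; 2] | _ => [:: 0] end.

Definition sigma (w : seq nat) : seq nat := flatten (map sigma_letter w).

Definition sigma_iter (k : nat) : seq nat := iter k sigma [:: 0].

(* Tribonacci numbers t_m = |sigma^m(a)|: t_0 = 1, t_1 = 2, t_2 = 4,
   t_m = t_{m-1} + t_{m-2} + t_{m-3}. *)
Fixpoint trib3 (m : nat) : nat * nat * nat :=
  match m with
  | 0 => (1, 2, 4)
  | k.+1 => let: (a, b, c) := trib3 k in (b, c, a + b + c)
  end.
Definition t (m : nat) : nat := (trib3 m).1.1.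

(* Tribonacci word, 1-indexed: x_n for n >= 1.  Each sigma^k(a) is a prefix
   of the fixed point T and |sigma^k(a)| = t_k; we read x_n off sigma^k(a)
   for the least k <= n with n <= t_k (such k exists since t_n >= n). *)
Definition trib (n : nat) : nat :=
  nth 0 (sigma_iter (find (fun k => n <= t k) (iota 0 n.+1))) n.-1.

Definition occurs_at (w : seq nat) (i : nat) : bool :=
  (0 < i) && all (fun k => trib (i + k) == nth 0 w k) (iota 0 (size w)).

Definition next_occ (w : seq nat) (i j : nat) : bool :=
  [&& occurs_at w i, occurs_at w j, i < j &
      all (fun k => ~~ occurs_at w k) (iota i.+1 (j - i.+1))].

Definition factor (i L : nat) : seq nat := mkseq (fun k => trib (i + k)) L.

(* (w, p) is a cube where w_p starts at position i:
   w nonempty, w_{p+1} starts right after w_p, w_{p+2} right after w_{p+1}. *)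
Definition cube_at (w : seq nat) (i : nat) : bool :=
  [&& 0 < size w, next_occ w i (i + size w) & next_occ w (i + size w) (i + 2 * size w)].

(* d(n): number of cubes (w,p) ending at position n.  A pair (w,p) is
   determined by (|w|, start position i of w_p), and w = factor i |w|;
   the cube ends at i + 3|w| - 1 = n, so i = n + 1 - 3|w|. *)
Definition d (n : nat) : nat :=
  count (fun L => (3 * L <= n) && cube_at (factor (n.+1 - 3 * L) L) (n.+1 - 3 * L))
        (iota 1 n).

Definition Gamma (m : nat) : seq nat :=
  let lo := (t m + t (m - 2) - 1) %/ 2 in
  let hi := (t m.+1 + t (m - 1) - 3) %/ 2 in
  iota lo (hi.+1 - lo).

Definition dV (V : seq nat) : seq nat := map d V.

Definition vadd (u v : seq nat) : seq nat := map (fun p => p.1 + p.2) (zip u v).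

(* Main.v *)
Require Import Defs.
From mathcomp Require Import all_boot zify.
Set Implicit Arguments. Unset Strict Implicit. Unset Printing Implicit Defensive.

Notation T := trib.
Notation S := sigma_iter.

Lemma sigma_cat u v : sigma (u ++ v) = sigma u ++ sigma v.
Proof. by rewrite /sigma map_cat flatten_cat. Qed.

Lemma iter_sigma_cat j u v : iter j sigma (u ++ v) = iter j sigma u ++ iter j sigma v.
Proof. elim: j => //= j IH; by rewrite IH sigma_cat. Qed.

Lemma S_succ k : S k.+1 = sigma (S k).
Proof. by []. Qed.

Lemma S_rec k : S k.+3 = S k.+2 ++ S k.+1 ++ S k.
Proof.
rewrite /sigma_iter iterSr (_ : sigma [:: 0] = [:: 0] ++ [:: 1]) // iter_sigma_cat.
congr (_ ++ _).
rewrite iterSr (_ : sigma [:: 1] = [:: 0] ++ [:: 2]) // iter_sigma_cat.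
congr (_ ++ _).
by rewrite iterSr.
Qed.

Lemma t_rec k : t k.+3 = t k.+2 + t k.+1 + t k.
Proof.
rewrite /t /=. case: (trib3 k) => [[a b] c] /=. lia.
Qed.

Lemma t0 : t 0 = 1. Proof. by []. Qed.
Lemma t1 : t 1 = 2. Proof. by []. Qed.
Lemma t2 : t 2 = 4. Proof. by []. Qed.

Lemma ind3 (P : nat -> Prop) : P 0 -> P 1 -> P 2 ->
  (forall k, P k -> P k.+1 -> P k.+2 -> P k.+3) -> forall k, P k.
Proof.
move=> P0 P1 P2 H k.
have: P k /\ P k.+1 /\ P k.+2.
  elim: k => [|k [A [B C]]]; first by [].
  by split=> //; split=> //; apply: H.
by case.
Qed.

Lemma size_S k : size (S k) = t k.
Proof.
elim/ind3: k => // k A B C.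
by rewrite S_rec !size_cat A B C t_rec; lia.
Qed.

Lemma t_pos k : 0 < t k.
Proof. elim/ind3: k => // k A B C; rewrite t_rec; lia. Qed.

Lemma t_ltS k : t k < t k.+1.
Proof.
case: k => [|[|k]] //; rewrite t_rec; have := t_pos k; have := t_pos k.+1; lia.
Qed.

Lemma t_lt k l : k < l -> t k < t l.
Proof. by apply: (homo_ltn ltn_trans) => i; exact: t_ltS. Qed.

Lemma t_le k l : k <= l -> t k <= t l.
Proof. rewrite leq_eqVlt => /orP [/eqP -> //| /t_lt]; lia. Qed.

Lemma t_ltE k l : (t k < t l) = (k < l).
Proof.
apply/idP/idP; last exact: t_lt.
case: (ltnP k l) => // H1 H2; have := t_le H1; lia.
Qed.

Lemma t_leE k l : (t k <= t l) = (k <= l).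
Proof. by rewrite leqNgt t_ltE -leqNgt. Qed.

Lemma t_ge k : k < t k.
Proof. elim: k => // k IH; have := t_ltS k; lia. Qed.

Lemma S_prefix k : exists X, S k.+1 = S k ++ X.
Proof.
case: k => [|[|k]]; [by exists [:: 1] | by exists [:: 0; 2] |].
by rewrite S_rec; eexists.
Qed.

Lemma S_prefixn k n : exists X, S (k + n) = S k ++ X.
Proof.
elim: n => [|n [X HX]]; first by exists [::]; rewrite addn0 cats0.
have [Y HY] := S_prefix (k + n).
by exists (X ++ Y); rewrite addnS HY HX catA.
Qed.

Lemma nth_S k l i : k <= l -> i < t k -> nth 0 (S k) i = nth 0 (S l) i.
Proof.
move=> Hkl Hi; have [X HX] := S_prefixn k (l - k).
rewrite (_ : l = k + (l - k)); last lia.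
by rewrite HX nth_cat size_S Hi.
Qed.

Lemma Tk k z : 0 < z <= t k -> T z = nth 0 (S k) z.-1.
Proof.
move=> /andP [Hz1 Hz2].
rewrite /trib.
set a := (fun k0 => z <= t k0).
have Hhas : has a (iota 0 z.+1).
  apply/hasP; exists z; first by rewrite mem_iota; lia.
  by rewrite /a; have := t_ge z; lia.
have := nth_find 0 Hhas.
have Hf : find a (iota 0 z.+1) < size (iota 0 z.+1) by rewrite -has_find.
rewrite nth_iota; last by rewrite size_iota in Hf.
rewrite add0n /a => Hk0.
set k0 := find _ _ in Hk0 *.
rewrite (@nth_S k0 (maxn k0 k)); [|lia|lia].
rewrite (@nth_S k (maxn k0 k)) //; lia.
Qed.

Lemma sigma_letters w : all (fun x => x <= 2) (sigma w).
Proof.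
elim: w => // x w IH; rewrite /sigma /= all_cat; apply/andP; split => //.
by case: x => [|[|x]].
Qed.

Lemma T_le2 z : T z <= 2.
Proof.
rewrite /trib; set k := find _ _.
case: k => [|k]; first by case: (z.-1) => [|[|]].
rewrite S_succ; set w := sigma _.
have := sigma_letters (S k); rewrite -/w.
case: (ltnP z.-1 (size w)) => H; last by rewrite nth_default.
by move/allP => /(_ (nth 0 w z.-1) (mem_nth 0 H)).
Qed.

Lemma size_factor i L : size (factor i L) = L.
Proof. by rewrite size_mkseq. Qed.

Lemma nth_factor i L u : u < L -> nth 0 (factor i L) u = T (i + u).
Proof. by move=> H; rewrite nth_mkseq. Qed.

Lemma factor_cat i a b : factor i (a + b) = factor i a ++ factor (i + a) b.
Proof.
apply: (@eq_from_nth _ 0); first by rewrite size_cat !size_factor.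
move=> u; rewrite size_factor => Hu.
rewrite nth_cat size_factor; case: ifP => H.
  by rewrite !nth_factor.
rewrite !nth_factor; [congr T; lia | lia | lia].
Qed.

Lemma factor_eqP i j L :
  reflect (forall u, u < L -> T (i + u) = T (j + u)) (factor i L == factor j L).
Proof.
apply: (iffP eqP) => H.
  by move=> u Hu; rewrite -(nth_factor i Hu) -(nth_factor j Hu) H.
apply: (@eq_from_nth _ 0); first by rewrite !size_factor.
by move=> u; rewrite size_factor => Hu; rewrite !nth_factor // H.
Qed.

Lemma S_prefix2 j : exists X, S j.+2 = S j.+1 ++ S j ++ X.
Proof.
case: j => [|j]; first by exists [:: 2].
by rewrite S_rec; eexists.
Qed.

Lemma t_sum_le k : t k.+1 + t k <= t k.+2.
Proof. case: k => [|k] //; rewrite t_rec; lia. Qed.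

Lemma BL j z : 0 < z <= t j.+1 + t j -> T (t j.+2 + z) = T z.
Proof.
move=> Hz.
have Hs := t_sum_le j.
rewrite (Tk (k := j.+3)); last by rewrite t_rec; lia.
rewrite S_rec nth_cat size_S ifF; last lia.
have [X HX] := S_prefix2 j.
rewrite (Tk (k := j.+2)); last lia.
rewrite HX catA [RHS]nth_cat size_cat !size_S ifT; last lia.
congr nth; lia.
Qed.

Fixpoint h k := if k is k'.+1 then h k' + t k' else 0.

Lemma hS k : h k.+1 = h k + t k. Proof. by []. Qed.

Lemma h_closed k : 2 * h k.+1 + 3 = t k.+2 + t k.
Proof.
elim: k => [|k IH] //.
rewrite hS t_rec; lia.
Qed.

Lemma h3 k : h k.+3 = t k.+3 + h k.
Proof. rewrite !hS t_rec; lia. Qed.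

Lemma t_S_le2 k : t k.+1 <= 2 * t k.
Proof. case: k => [|[|k]] //; rewrite t_rec; have := t_sum_le k; lia. Qed.

Lemma t_32 k : 3 * t k <= 2 * t k.+1.
Proof.
case: k => [|[|k]] //; rewrite t_rec; have := t_S_le2 k.+1; lia.
Qed.

Lemma h_lt2t k : h k < 2 * t k.
Proof.
elim: k => [|k IH] //; rewrite hS; have := t_32 k; lia.
Qed.

Lemma h_le_tS k : h k <= t k.+1.
Proof. elim: k => [|k IH] //; rewrite hS; have := t_sum_le k; lia. Qed.

Lemma t_le_h k : 3 <= k -> t k <= h k.
Proof.
elim: k => [|k IH] //; rewrite ltnS leq_eqVlt => /orP [/eqP <- //|/IH H].
rewrite hS; have := t_S_le2 k; lia.
Qed.

Lemma h_mono k l : k <= l -> h k <= h l.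
Proof.
move=> /subnK <-; elim: (l - k) => [|n IH] //; rewrite addSn hS; lia.
Qed.

Lemma h_ltE k l : (h k < h l) = (k < l).
Proof.
apply/idP/idP.
  case: (ltnP k l) => // H1 H2; have := h_mono H1; lia.
move=> H; have := h_mono H; rewrite hS; have := t_pos k; lia.
Qed.

Lemma SH k z : 0 < z <= h k -> T (t k + z) = T z.
Proof.
elim: k {-2}k (leqnn k) z => [|n IH] k Hk z Hz.
  by move: Hk Hz; rewrite leqn0 => /eqP -> /=; lia.
case: k Hk Hz => [|[|[|k]]] Hk Hz.
- by move: Hz => /=; lia.
- have H1 : h 1 = 1 by [].
  have -> : z = 1 by lia.
  by rewrite (Tk (k := 2)) // (Tk (k := 2)).
- by rewrite (BL (j := 0)) //; move: Hz; rewrite (_ : h 2 = 3) //.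
- case: (leqP z (t k.+2 + t k.+1)) => Hz2.
    by rewrite BL //; lia.
  have Hh := h3 k.
  have Hhl := h_le_tS k.
  have Ht := t_rec k.
  have Ht4 := t_rec k.+1.
  have Hh1 : h k.+1 = h k + t k by [].
  have Hh2 : h k.+2 = h k + t k + t k.+1 by [].
  set z' := z - (t k.+2 + t k.+1).
  have -> : t k.+3 + z = t k.+4 + z' by rewrite /z'; lia.
  rewrite BL; last by rewrite /z'; lia.
  have -> : z = t k.+2 + (t k.+1 + z') by rewrite /z'; lia.
  rewrite IH; [|lia|rewrite /z'; lia].
  rewrite IH; [done|lia|rewrite /z'; lia].
Qed.

Lemma T_h k : T (h k).+1 = k %% 3.
Proof.
elim/ind3: k => [|||k IH _ _].
- by rewrite (Tk (k := 0)).
- by rewrite (Tk (k := 1)).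
- by rewrite (Tk (k := 2)).
rewrite h3 -addnS SH; last by rewrite h3; have := t_pos k.+3; lia.
rewrite IH; lia.
Qed.

Lemma T_t k : T (t k) = k %% 3.
Proof.
elim/ind3: k => [|||k IH _ _].
- by rewrite (Tk (k := 0)).
- by rewrite (Tk (k := 1)).
- by rewrite (Tk (k := 2)).
rewrite (Tk (k := k.+3)); last by have := t_pos k.+3; lia.
rewrite S_rec !nth_cat !size_S t_rec.
have := t_pos k; have := t_pos k.+1; have := t_pos k.+2 => *.
rewrite ifF; last lia. rewrite ifF; last lia.
have -> : k.+3 %% 3 = k %% 3 by lia.
rewrite -IH (Tk (k := k)); last lia.
congr nth; lia.
Qed.

Lemma MM k : T (h k).+1 != T (h k + t k).+1.
Proof.
rewrite -hS !T_h; apply/eqP; lia.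
Qed.

Definition pos j := size (sigma (factor 1 j)).

Lemma factor1_S j : factor 1 j = take j (S j).
Proof.
apply: (@eq_from_nth _ 0).
  rewrite size_factor size_take size_S; have := t_ge j; case: ifP; lia.
move=> u; rewrite size_factor => Hu.
rewrite nth_factor // nth_take // (Tk (k := j)) //; have := t_ge j; lia.
Qed.

Lemma sigma_prefix j : sigma (factor 1 j) = factor 1 (pos j).
Proof.
apply: (@eq_from_nth _ 0); first by rewrite size_factor.
move=> u Hu.
rewrite nth_factor // (Tk (k := j.+1)); last first.
  have: pos j <= t j.+1.
    rewrite /pos -size_S S_succ -(cat_take_drop j (S j)) sigma_cat size_cat factor1_S; lia.
  rewrite /pos in Hu *; lia.
rewrite S_succ -(cat_take_drop j (S j)) sigma_cat nth_cat -factor1_S ifT //.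
Qed.

Lemma pos_cat j N : pos (j + N) = pos j + size (sigma (factor j.+1 N)).
Proof. by rewrite /pos factor_cat sigma_cat size_cat add1n. Qed.

Lemma BLOCK j N : factor (pos j).+1 (pos (j + N) - pos j) = sigma (factor j.+1 N).
Proof.
have E := sigma_prefix (j + N).
rewrite factor_cat sigma_cat sigma_prefix in E.
have E2 : factor 1 (pos (j + N)) = factor 1 (pos j) ++ factor (1 + pos j) (pos (j + N) - pos j).
  rewrite -factor_cat; congr factor; rewrite pos_cat; lia.
rewrite E2 in E.
move/eqP: E; rewrite eqseq_cat; last by rewrite !size_factor.
by case/andP => _ /eqP; rewrite add1n add1n.
Qed.

Lemma T_block j u : u < size (sigma_letter (T j.+1)) ->
  T ((pos j).+1 + u) = nth 0 (sigma_letter (T j.+1)) u.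
Proof.
move=> Hu.
have := BLOCK j 1; rewrite pos_cat addKn.
rewrite (_ : factor j.+1 1 = [:: T j.+1]); last by rewrite /factor /mkseq /= addn0.
rewrite /sigma /= cats0 => E.
by rewrite -E nth_factor.
Qed.

Lemma posS j : pos j.+1 = pos j + size (sigma_letter (T j.+1)).
Proof.
rewrite -addn1 pos_cat; congr (_ + _).
by rewrite /factor /mkseq /= addn0 addn1 /sigma /= cats0.
Qed.

Lemma pos0 : pos 0 = 0. Proof. by []. Qed.

Lemma size_sl x : 0 < size (sigma_letter x) <= 2.
Proof. by case: x => [|[|x]]. Qed.

Lemma B1 j : T (pos j).+1 = 0.
Proof.
have H : 0 < size (sigma_letter (T j.+1)) by have := size_sl (T j.+1); lia.
have := T_block H; rewrite addn0 => ->.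
by case: (T j.+1) => [|[|]].
Qed.

Definition g (x : nat) := x.+1 %% 3.

Lemma B3 j : T (pos j).+2 = g (T j.+1).
Proof.
have := T_le2 j.+1.
case E: (T j.+1) => [|[|[|x]]] // _.
- by rewrite (_ : (pos j).+2 = (pos j).+1 + 1) ?T_block ?E //; lia.
- by rewrite (_ : (pos j).+2 = (pos j).+1 + 1) ?T_block ?E //; lia.
- rewrite (_ : (pos j).+2 = (pos j.+1).+1); first by rewrite B1.
  by rewrite posS E addn1.
Qed.

Lemma B4 j : T (pos j.+1) = g (T j.+1).
Proof.
have := T_le2 j.+1.
case E: (T j.+1) => [|[|[|x]]] // _; rewrite posS E /=.
- by rewrite (_ : pos j + 2 = (pos j).+1 + 1) ?T_block ?E //; lia.
- by rewrite (_ : pos j + 2 = (pos j).+1 + 1) ?T_block ?E //; lia.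
- by rewrite addn1 B1.
Qed.

Lemma g_inj x y : x <= 2 -> y <= 2 -> g x = g y -> x = y.
Proof. by case: x => [|[|[|x]]] //; case: y => [|[|[|y]]]. Qed.

Lemma pos_t k : pos (t k) = t k.+1.
Proof.
rewrite /pos (_ : factor 1 (t k) = S k); first by rewrite -S_succ size_S.
apply: (@eq_from_nth _ 0); first by rewrite size_factor size_S.
move=> u; rewrite size_factor => Hu.
by rewrite nth_factor // (Tk (k := k)) //; lia.
Qed.

Lemma pos_mono j N : pos j + N <= pos (j + N).
Proof.
elim: N => [|N IH]; first by rewrite !addn0.
rewrite !addnS posS; have := size_sl (T (j + N).+1); lia.
Qed.

Lemma pos_ge j : j <= pos j.
Proof. by have := pos_mono 0 j. Qed.

Lemma pos1 : pos 1 = 2.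
Proof. by rewrite posS pos0 (Tk (k := 0)). Qed.

Lemma pos_gt j : 0 < j -> j < pos j.
Proof.
case: j => // j _; have := pos_mono 1 j; rewrite pos1 add1n; lia.
Qed.

Lemma cover p : 0 < p -> exists j, pos j < p <= pos j.+1.
Proof.
elim: p => // p IH _.
case: p IH => [|p] IH.
  by exists 0; rewrite pos1 pos0.
case: (IH isT) => j /andP [H1 H2].
case: (ltnP p.+1 (pos j.+1)) => H3.
  by exists j; lia.
exists j.+1; rewrite [pos j.+2]posS; have := size_sl (T j.+2); lia.
Qed.

Lemma a_pos p : 0 < p -> T p = 0 -> exists j, p = (pos j).+1.
Proof.
move=> Hp HT; case: (cover Hp) => j /andP [H1 H2].
exists j; move: H2; rewrite posS.
have := T_le2 j.+1.
case E: (T j.+1) => [|[|[|x]]] // _ /= H2.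
- case: (ltnP p (pos j).+2) => H4; first lia.
  have Ep : p = (pos j).+1 + 1 by lia.
  by move: HT; rewrite Ep T_block E.
- case: (ltnP p (pos j).+2) => H4; first lia.
  have Ep : p = (pos j).+1 + 1 by lia.
  by move: HT; rewrite Ep T_block E.
- lia.
Qed.

Lemma nonA p : 0 < p -> T p != 0 -> 1 < p /\ T p.-1 = 0.
Proof.
move=> Hp HT; case: (cover Hp) => j /andP [H1 H2].
case: (ltnP p (pos j).+2) => H4.
  have Ep : p = (pos j).+1 by lia.
  by move: HT; rewrite Ep B1.
have -> : p.-1 = (pos j).+1 by move: H2; rewrite posS; have := size_sl (T j.+1); lia.
split; [lia | exact: B1].
Qed.

Lemma noCC j : pos j + 3 <= pos j.+2.
Proof.
rewrite !posS.
have := size_sl (T j.+1); have := size_sl (T j.+2).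
case E2: (T j.+2) => [|[|x]]; try (rewrite /=; lia).
have [_ E1] : 1 < j.+2 /\ T j.+2.-1 = 0 by apply: nonA => //; rewrite E2.
by rewrite /= E1 /=; lia.
Qed.

Lemma pos_le j l : j <= l -> pos j <= pos l.
Proof. move=> H; have := pos_mono j (l - j); rewrite subnKC //; lia. Qed.

Lemma pos_add j r : (forall u, u < r -> T (j.+1 + u) = T (1 + u)) ->
  pos (j + r) = pos j + pos r.
Proof.
move=> H; rewrite pos_cat; congr (_ + _); rewrite /pos.
by move/factor_eqP/eqP: H => ->.
Qed.

Lemma block_eq j r : (forall u, u < r -> T (j.+1 + u) = T (1 + u)) ->
  forall v, v <= pos r -> T ((pos j).+1 + v) = T v.+1.
Proof.
move=> H v Hv.
have Ep := pos_add H.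
case: (ltnP v (pos r)) => Hv2.
  have := BLOCK j r; rewrite Ep addKn.
  move/factor_eqP/eqP: H => ->; rewrite sigma_prefix => /eqP/factor_eqP E.
  by rewrite E.
have -> : v = pos r by lia.
by rewrite (_ : (pos j).+1 + pos r = (pos (j + r)).+1) ?B1 // Ep; lia.
Qed.

Lemma F2 L : 0 < L -> (forall z, 0 < z -> z < L -> T z = T (z + L)) -> exists k, L = t k.
Proof.
elim: L {-2}L (leqnn L) => [|n IH] L HL HL0 Hper; first lia.
case: (ltnP L 2) => HL2.
  by exists 0; rewrite t0; lia.
have HT : T (L + 1) = 0 by rewrite addnC -(Hper 1) //; rewrite (Tk (k := 0)).
have HL1 : 0 < L + 1 by lia.
have [j Ej] := a_pos HL1 HT.
have EL : L = pos j by lia.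
have Hj0 : 0 < j by case: j Ej EL => [|j] //; rewrite pos0; lia.
have HjL : j < L by rewrite EL; exact: pos_gt.
have Hclaim : forall z, 0 < z -> z < j -> T z = T (z + j).
  move=> z; elim: z {-2}z (leqnn z) => [|m IHm] z Hzm Hz0 Hzj; first lia.
  case: (eqVneq (T z) (T (z + j))) => // Hne.
  set r := z.-1.
  have Hr : forall u, u < r -> T (j.+1 + u) = T (1 + u).
    move=> u Hu; have H1 : u.+1 <= m by rewrite /r in Hu; lia.
    have H3 : u.+1 < j by rewrite /r in Hu; lia.
    by rewrite (IHm u.+1 H1 isT H3); congr T; lia.
  have Ep := pos_add Hr.
  have E1 := B3 r; have E2 := B3 (j + r).
  have Hz : z = r.+1 by rewrite /r; lia.
  have Hne2 : g (T r.+1) != g (T (j + r).+1).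
    apply/negP => /eqP /g_inj H.
    move: Hne; rewrite Hz H ?T_le2 // (_ : r.+1 + j = (j + r).+1) ?eqxx //; lia.
  have Hlt : (pos r).+2 < L.
    have Hrj : r.+2 <= j by rewrite /r; lia.
    have := pos_le Hrj; have := noCC r; clear -EL; lia.
  move: Hne2; rewrite -E1 -E2 (Hper (pos r).+2 isT Hlt).
  by rewrite Ep EL (_ : (pos r).+2 + pos j = (pos j + pos r).+2) ?eqxx //; lia.
have Hjn : j <= n by lia.
have [k Ek] := IH j Hjn Hj0 Hclaim.
by exists k.+1; rewrite EL Ek pos_t.
Qed.

Lemma F3 n : forall p q, 1 < p -> 1 < q -> T p.-1 != T q.-1 ->
  (forall u, u < n -> T (p + u) = T (q + u)) ->
  forall u, u < n -> T (p + u) = T u.+1.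
Proof.
elim: n {-2}n (leqnn n) => [|N IH] n Hn p q Hp Hq Hpq Heq u Hu; first lia.
case: n Hn Heq Hu => [|n] Hn Heq Hu; first lia.
have E0 : T p = T q by have := Heq 0 isT; rewrite !addn0.
have Hp0 : T p = 0.
  case: (eqVneq (T p) 0) => // HpA.
  have [_ H1] := nonA (ltnW Hp) HpA.
  have HqA : T q != 0 by rewrite -E0.
  have [_ H2] := nonA (ltnW Hq) HqA.
  by move: Hpq; rewrite H1 H2.
have [j Ej] := a_pos (ltnW Hp) Hp0.
have [j' Ej'] := a_pos (ltnW Hq) (etrans (esym E0) Hp0).
case: j Ej => [|j] Ej; first by move: Hp; rewrite Ej pos0.
case: j' Ej' => [|j'] Ej'; first by move: Hq; rewrite Ej' pos0.
have Hjj : T j.+1 != T j'.+1.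
  apply/negP => /eqP E; move: Hpq; rewrite Ej Ej' /= !B4 E eqxx //.
set P := fun v => T (j.+2 + v) != T (j'.+2 + v).
set r := find P (iota 0 n).
have Hr1 : r <= n by rewrite /r; have := find_size P (iota 0 n); rewrite size_iota.
have Hr2 : forall v, v < r -> T (j.+2 + v) = T (j'.+2 + v).
  move=> v Hv; have := before_find 0 Hv; rewrite nth_iota; last lia.
  by rewrite /P add0n => /negbFE/eqP.
have IHr : forall v, v < r -> T (j.+2 + v) = T v.+1.
  have HrN : r <= N by lia.
  by move=> v Hv; apply: (IH r HrN j.+2 j'.+2 _ _ Hjj Hr2 v Hv).
have Hr3 : forall v, v < r -> T (j.+1.+1 + v) = T (1 + v).
  by move=> v Hv; rewrite IHr.
have Hblk := block_eq Hr3.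
have Hnr : n.+1 <= (pos r).+1.
  case: (ltnP r n) => Hrn.
    have Hhas : has P (iota 0 n) by rewrite has_find size_iota.
    have := nth_find 0 Hhas; rewrite -/r nth_iota // add0n /P => Hmis.
    have Hr4 : forall v, v < r -> T (j'.+1.+1 + v) = T (1 + v).
      by move=> v Hv; rewrite -Hr2 // IHr.
    have Ep := pos_add Hr3; have Ep' := pos_add Hr4.
    have E1 := B3 (j.+1 + r); have E2 := B3 (j'.+1 + r).
    case: (ltnP (pos r).+1 n.+1) => // Hlt.
    have := Heq (pos r).+1 Hlt.
    rewrite Ej Ej' (_ : (pos j.+1).+1 + (pos r).+1 = (pos (j.+1 + r)).+2); last by rewrite Ep; lia.
    rewrite (_ : (pos j'.+1).+1 + (pos r).+1 = (pos (j'.+1 + r)).+2); last by rewrite Ep'; lia.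
    rewrite E1 E2 => /g_inj H.
    move: Hmis; rewrite (_ : j.+2 + r = (j.+1 + r).+1); last lia.
    by rewrite (_ : j'.+2 + r = (j'.+1 + r).+1) ?(H (T_le2 _) (T_le2 _)) ?eqxx //; lia.
  have := pos_ge r; lia.
rewrite Ej; apply: Hblk; lia.
Qed.

Lemma ext_left p i N : 0 < i -> (forall z, i <= z -> z < i + N -> T z = T (z + p)) ->
  exists s N', [/\ 0 < s, N <= N', (forall z, s <= z -> z < s + N' -> T z = T (z + p))
                 & (s = 1 \/ T s.-1 != T (s.-1 + p))].
Proof.
elim: i N => [|i IH] N Hi H; first lia.
case: i IH Hi H => [|i] IH Hi H.
  by exists 1, N; split => //; left.
case: (eqVneq (T i.+1) (T (i.+1 + p))) => E.
  have H' : forall z, i.+1 <= z -> z < i.+1 + N.+1 -> T z = T (z + p).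
    move=> z Hz1 Hz2; case: (eqVneq z i.+1) => [->|Hz] //.
    by apply: H; lia.
  have [s [N' [A B C D]]] := IH N.+1 isT H'.
  by exists s, N'; split => //; lia.
by exists i.+2, N; split => //; right.
Qed.

Lemma RUN i p N : 0 < i -> 0 < p -> p.*2 <= N.+1 ->
  (forall z, i <= z -> z < i + N -> T z = T (z + p)) ->
  exists k, p = t k /\ N <= p + h k.
Proof.
move=> Hi Hp HN H.
have [s [N' [Hs HNN HP Hleft]]] := ext_left Hi H.
have Hpre : forall u, u < N' -> T (s + u) = T u.+1.
  move=> u Hu; case: (eqVneq s 1) => [E1|Hs1]; first by rewrite E1 add1n.
  case: Hleft => [E1|Hl]; first by rewrite E1 in Hs1.
  have Hs2 : 1 < s by lia.
  apply: (F3 (q := s + p) Hs2 _ _ _ Hu).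
  - lia.
  - by rewrite (_ : (s + p).-1 = s.-1 + p) //; lia.
  - move=> v Hv; rewrite HP; [congr T | |]; lia.
have Hpref : forall u, u + p < N' -> T u.+1 = T (u.+1 + p).
  move=> u Hu.
  have A1 : T (s + u) = T u.+1 by apply: Hpre; lia.
  have A2 : T (s + (u + p)) = T (u + p).+1 by apply: Hpre; lia.
  have A3 : T (s + u) = T (s + u + p) by apply: HP; lia.
  rewrite -A1 A3 (_ : u.+1 + p = (u+p).+1); last lia.
  by rewrite -A2 addnA.
have [k Ek] : exists k, p = t k.
  apply: F2 => // z Hz1 Hz2.
  have -> : z = (z.-1).+1 by lia.
  apply: Hpref; lia.
exists k; split => //.
case: (leqP N (p + h k)) => // Hbad.
have := MM k; rewrite Hpref; last lia.
by rewrite Ek (_ : (h k).+1 + t k = (h k + t k).+1) ?eqxx //; lia.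
Qed.

Definition perb i L := all (fun z => T z == T (z + L)) (iota i L.*2).

Lemma perbP i L : reflect (forall z, i <= z -> z < i + L.*2 -> T z = T (z + L)) (perb i L).
Proof.
apply: (iffP allP) => H.
  by move=> z Hz1 Hz2; apply/eqP/H; rewrite mem_iota; lia.
by move=> z; rewrite mem_iota => /andP [H1 H2]; apply/eqP/H; lia.
Qed.

Lemma occP i L j : reflect (0 < j /\ forall u, u < L -> T (j + u) = T (i + u))
  (occurs_at (factor i L) j).
Proof.
rewrite /occurs_at size_factor.
apply: (iffP andP) => [[H1 /allP H2]|[H1 H2]]; split => //.
  move=> u Hu; have := H2 u; rewrite mem_iota nth_factor // => /(_ _)/eqP; apply; lia.
apply/allP => u; rewrite mem_iota => Hu; rewrite nth_factor; last lia.
apply/eqP/H2; lia.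
Qed.

Lemma no_short_period i L r' : 0 < i -> 0 < L -> 0 < r' < L.*2 -> r' != L ->
  (forall z, i <= z -> z < i + L.*2 -> T z = T (z + L)) ->
  (forall u, u < L -> T (i + r' + u) = T (i + u)) -> False.
Proof.
move=> Hi HL Hr' HrL Hper Hocc.
set G := fun v => T (i + v %% L).
have Hred : forall q b, b < L -> q < 3 -> T (i + (q * L + b)) = T (i + b).
  move=> q b Hb Hq.
  have E1 : T (i + b) = T (i + b + L) by apply: Hper; lia.
  have E2 : T (i + b + L) = T (i + b + L + L) by apply: Hper; lia.
  case: q Hq => [|[|[|q]]] Hq; try lia.
  - by congr T; lia.
  - by rewrite E1; congr T; lia.
  - by rewrite E1 E2; congr T; lia.
have P1 : forall a, a < 3 * L -> T (i + a) = G a.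
  move=> a Ha; rewrite /G {1}(divn_eq a L) Hred //; first by rewrite ltn_mod.
  by rewrite ltn_divLR //; lia.
have P2 : forall v, G v = G (r' + v).
  move=> v; rewrite /G.
  have Hv : v %% L < L by rewrite ltn_mod.
  rewrite -(Hocc (v %% L) Hv) -addnA.
  rewrite (P1 (r' + v %% L)); last lia.
  by rewrite /G modnDmr.
set r := r' %% L.
have Hr0 : 0 < r.
  rewrite /r; case: (ltnP r' L) => H; first by rewrite modn_small; lia.
  rewrite (_ : r' = (r' - L) + L); last lia.
  by rewrite modnDr modn_small; lia.
have HrL2 : r < L by rewrite ltn_mod.
have P3 : forall v, G v = G (v + r).
  move=> v; rewrite P2 /G; congr (T (i + _)).
  by rewrite /r modnDmr addnC.
have PL : forall v, G (v + L) = G v by move=> v; rewrite /G modnDr.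
have P4 : forall v, G v = G (v + (L - r)).
  move=> v; rewrite -PL (_ : v + L = v + (L - r) + r); last lia.
  by rewrite -P3.
set p := minn r (L - r).
have Hp0 : 0 < p by rewrite /p; lia.
have Hp2 : p.*2 <= L by rewrite /p; lia.
have P5 : forall v, G v = G (v + p).
  by move=> v; rewrite /p /minn; case: ifP => _; [apply: P3 | apply: P4].
have Hrun : forall z, i <= z -> z < i + (3 * L - p) -> T z = T (z + p).
  move=> z Hz1 Hz2.
  rewrite (_ : z = i + (z - i)); last lia.
  rewrite P1; last lia.
  rewrite -addnA P1; last lia.
  exact: P5.
have Hp3 : p.*2 <= (3 * L - p).+1 by lia.
have [k [Ek HN]] := RUN Hi Hp0 Hp3 Hrun.
have := h_lt2t k; lia.
Qed.

Lemma cubeE i L : 0 < i -> 0 < L -> cube_at (factor i L) i = perb i L.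
Proof.
move=> Hi HL.
rewrite /cube_at /next_occ size_factor HL /=.
apply/idP/idP.
  case/andP => /and4P [_ /occP [_ O1] _ _] /and4P [_ /occP [_ O2] _ _].
  apply/perbP => z Hz1 Hz2.
  case: (ltnP z (i + L)) => Hz3.
    have Hu : z - i < L by lia.
    have := O1 (z - i) Hu.
    rewrite (_ : i + L + (z - i) = z + L); last lia.
    rewrite (_ : i + (z - i) = z); last lia.
    by move=> ->.
  have Hu : z - i - L < L by lia.
  have A := O2 _ Hu.
  have B := O1 _ Hu.
  rewrite (_ : i + 2 * L + (z - i - L) = z + L) in A; last lia.
  rewrite (_ : i + L + (z - i - L) = z) in B; last lia.
  rewrite A B //; lia.
move/perbP => Hper.
have Occ : forall q, q < 3 -> occurs_at (factor i L) (i + q * L).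
  move=> q Hq; apply/occP; split; first lia.
  move=> u Hu.
  have E1 : T (i + u) = T (i + u + L) by apply: Hper; lia.
  have E2 : T (i + u + L) = T (i + u + L + L) by apply: Hper; lia.
  case: q Hq => [|[|[|q]]] Hq; try lia.
  - by congr T; lia.
  - by rewrite E1; congr T; lia.
  - by rewrite E1 E2; congr T; lia.
have Hno : forall k, i < k < i + L.*2 -> k != i + L -> ~~ occurs_at (factor i L) k.
  move=> k Hk HkL; apply/negP => /occP [_ Hocc].
  apply: (@no_short_period i L (k - i)) => //; first lia.
    by apply/negP => /eqP E; move: HkL; rewrite -E (_ : i + (k - i) = k) ?eqxx //; lia.
  by move=> u Hu; rewrite (_ : i + (k - i) = k) ?Hocc //; lia.
have O0 := Occ 0 isT; have O1 := Occ 1 isT; have O2 := Occ 2 isT.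
rewrite mul0n addn0 in O0; rewrite mul1n in O1.
rewrite O0 O1 O2 /=.
apply/and3P; split.
- apply/andP; split; first lia.
  apply/allP => k; rewrite mem_iota => Hk; apply: Hno; lia.
- lia.
- apply/allP => k; rewrite mem_iota => Hk; apply: Hno; lia.
Qed.

Lemma dE n : d n = count (fun L => (3 * L <= n) && perb (n.+1 - 3 * L) L) (iota 1 n).
Proof.
apply: eq_in_count => L; rewrite mem_iota => /andP [HL1 HL2].
change nat in L.
case: (leqP (3 * L) n) => H //=.
rewrite cubeE //; lia.
Qed.

Lemma perb_shift a i L : 0 < i -> 0 < L -> i + 3 * L <= (h a).+1 ->
  perb (t a + i) L = perb i L.
Proof.
move=> Hi HL Hb.
have E : forall z, i <= z -> z < i + L.*2 -> T (t a + z) = T z /\ T (t a + z + L) = T (z + L).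
  move=> z Hz1 Hz2; rewrite -addnA !SH //; lia.
apply/perbP/perbP => H z Hz1 Hz2.
  have [E1 E2] := E z Hz1 Hz2.
  by rewrite -E1 -E2; apply: H; lia.
have Hz3 : i <= z - t a by lia.
have Hz4 : z - t a < i + L.*2 by lia.
have [E1 E2] := E (z - t a) Hz3 Hz4.
rewrite (_ : t a + (z - t a) = z) in E1 E2; last lia.
by rewrite E1 E2; apply: H; lia.
Qed.

Lemma straddle a n' L : 6 <= a -> h a.+3 < n' <= h a.+4 -> 0 < L -> 3 * L <= n' ->
  n' - t a.+3 < 3 * L -> perb (n'.+1 - 3 * L) L ->
  L = t a /\ t a.+3 + 2 * t a <= n' <= t a.+3 + h a.+1.
Proof.
move=> Ha Hn HL H3L Hstr /perbP Hper.
set i := n'.+1 - 3 * L.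
have Hi : 0 < i by rewrite /i; lia.
have Hper' : forall z, i <= z -> z < i + L.*2 -> T z = T (z + L) := Hper.
have HL2 : L.*2 <= (L.*2).+1 by lia.
have [k [Ek HN]] := RUN Hi HL HL2 Hper'.
have Hh4 : h a.+4 = h a.+3 + t a.+3 by [].
have Hh3 := h3 a.
have Htr := t_rec a.
have Hlt2 := h_lt2t a.+3.
have Ha3 : 3 <= a by lia.
have Hta := t_le_h Ha3.
have Hkle : k < a.+3.
  rewrite -t_ltE -Ek; lia.
have Mis : forall x, i <= x -> x < i + L.*2 -> T x != T (x + L) -> False.
  by move=> x H1 H2 /eqP; apply; apply: Hper.
have Hi_le : i <= t a.+3 by rewrite /i; lia.
have Hha : h a < h a.+3 by rewrite h_ltE; lia.
case: (eqVneq (k %% 3) (a %% 3)) => Hmod.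
- have Hka : k <= a by move/eqP: Hmod; lia.
  have Hhk : h k <= h a := h_mono Hka.
  have Hhk1 : h k.+1 <= h a.+1 by apply: h_mono; lia.
  have Hh1 : h a.+1 = h a + t a by [].
  have Hh2 : h a.+2 = h a.+1 + t a.+1 by [].
  have HhkS : h k.+1 = h k + t k by [].
  set x := t a.+3 + (h k).+1.
  have Ex1 : T x = T (h k).+1 by rewrite /x SH //; lia.
  have Ex2 : T (x + L) = T (h k + t k).+1.
    by rewrite /x Ek -addnA addSn SH //; lia.
  have Hx : i + L.*2 <= x.
    case: (ltnP x (i + L.*2)) => // Hx; exfalso.
    by apply: (Mis x) => //; [lia | rewrite Ex1 Ex2 MM].
  have Hk : k = a.
    case: (ltnP k a) => Hk; last lia.
    have : h k.+1 <= h a := h_mono Hk.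
    lia.
  subst k; split => //; apply/andP; split; last lia.
  set w0 := t a.+2 + t a.+1.
  have Ew1 : T w0 = a.+1 %% 3.
    by rewrite /w0 SH; [exact: T_t | have := t_pos a.+1; lia].
  have Ew2 : T (w0 + L) = a.+3 %% 3.
    by rewrite /w0 Ek -T_t Htr.
  case: (ltnP w0 i) => Hw; first by rewrite /i in Hw; lia.
  exfalso; apply: (Mis w0) => //; first lia.
  by rewrite Ew1 Ew2; apply/eqP; lia.
- have Et1 : T (t a.+3) = a.+3 %% 3 := T_t _.
  have Htk : t k <= t a.+2 by rewrite t_leE; lia.
  have Htk2 : t a.+2 <= h a.+3 by rewrite h3 Htr; lia.
  have Et2 : T (t a.+3 + L) = k %% 3.
    by rewrite Ek SH; [exact: T_t | have := t_pos k; lia].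
  have Hx : i + L.*2 <= t a.+3.
    case: (ltnP (t a.+3) (i + L.*2)) => // Hx; exfalso.
    by apply: (Mis (t a.+3)) => //; rewrite Et1 Et2; apply/eqP; move/eqP: Hmod; lia.
  have Hk : a < k.
    case: (ltnP a k) => // Hk.
    have := t_le Hk; lia.
  have Hk2 : k = a.+1.
    case: (ltnP k a.+2) => Hk2; first lia.
    have Ek2 : k = a.+2 by lia.
    subst k; have := t_sum_le a; lia.
  subst k; exfalso.
  have Hh2 : h a.+2 = h a.+1 + t a.+1 by [].
  set y := t a.+2 + (h a.+1).+1.
  have Ey1 : T y = a.+1 %% 3 by rewrite /y SH; [exact: T_h | lia].
  have Ey2 : T (y + L) = a.+3 %% 3.
    rewrite /y Ek -T_h (_ : t a.+2 + (h a.+1).+1 + t a.+1 = (h a.+3).+1) //.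
    rewrite h3 Htr; have := hS a; lia.
  apply: (Mis y); [ |  | by rewrite Ey1 Ey2; apply/eqP; lia].
  + rewrite /y /i; have := t_le (leqnSn a); lia.
  + rewrite /y /i; have := hS a; lia.
Qed.

Lemma window a n' : 6 <= a -> t a.+3 + 2 * t a <= n' <= t a.+3 + h a.+1 ->
  perb (n'.+1 - 3 * t a) (t a).
Proof.
move=> Ha Hn; apply/perbP => z Hz1 Hz2.
have Htr := t_rec a.
have Hh1 := hS a; have Hh2 := hS a.+1; have Hh3 := h3 a.
have Hta : t a <= h a by apply: t_le_h; lia.
have Hp := t_pos a.
case: (leqP z (t a.+3)) => Hz.
  set u := z - (t a.+2 + t a.+1).
  have Hu : 0 < u <= t a by rewrite /u; lia.
  have -> : z = t a.+2 + (t a.+1 + u) by rewrite /u; lia.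
  rewrite SH; last lia.
  rewrite SH; last lia.
  rewrite (_ : t a.+2 + (t a.+1 + u) + t a = t a.+3 + u); last lia.
  rewrite SH //; lia.
set u := z - t a.+3.
have Hu : 0 < u <= h a by rewrite /u; lia.
have -> : z = t a.+3 + u by rewrite /u; lia.
rewrite SH; last lia.
rewrite -addnA SH; last lia.
by rewrite addnC SH.
Qed.

Lemma count_split (T0 : Type) (P B : pred T0) s :
  count P s = count (fun x => P x && B x) s + count (fun x => P x && ~~ B x) s.
Proof. elim: s => //= x s ->; case: (P x); case: (B x) => /=; lia. Qed.

Lemma count_single (P : pred nat) x0 s : (forall x, P x -> x = x0) ->
  count P s = P x0 * count_mem x0 s.
Proof.
move=> H; elim: s => [|x s IH] /=; first by rewrite muln0.
rewrite IH mulnDr.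
case: (eqVneq x x0) => [->|Hx]; first by rewrite muln1.
rewrite muln0 add0n.
case E: (P x) => //.
by move: (H x E) Hx => ->; rewrite eqxx.
Qed.

Lemma drec a n' : 6 <= a -> h a.+3 < n' <= h a.+4 ->
  d n' = d (n' - t a.+3) + ((t a.+3 + 2 * t a <= n') && (n' <= t a.+3 + h a.+1)).
Proof.
move=> Ha Hn.
have Hh4 : h a.+4 = h a.+3 + t a.+3 by [].
have Hh3 := h3 a.
have Hlt2 := h_lt2t a.
have Htah : t a <= h a by apply: t_le_h; lia.
rewrite !dE.
set n := n' - t a.+3.
rewrite (count_split _ (fun L => 3 * L <= n)).
congr (_ + _).
  have E : iota 1 n' = iota 1 n ++ iota n.+1 (n' - n).
    by rewrite -iotaD /n; congr iota; lia.
  rewrite E count_cat.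
  rewrite [X in _ + X = _](_ : _ = 0); last first.
    apply/eqP; rewrite -leqn0 leqNgt -has_count; apply/hasP => [[L]].
    by rewrite mem_iota => /andP [H1 _] /andP [_ H2]; lia.
  rewrite addn0; apply: eq_in_count => L; rewrite mem_iota => /andP [HL1 HL2].
  change nat in L.
  case: (leqP (3 * L) n) => H3; last by rewrite andbF.
  rewrite andbT (_ : 3 * L <= n' = true); last by apply/idP; lia.
  rewrite /= (_ : n'.+1 - 3 * L = t a.+3 + (n.+1 - 3 * L)); last by rewrite /n; lia.
  apply: perb_shift; lia.
rewrite (@count_single _ (t a)); last first.
  move=> L /andP [/andP [H1 H2] H3].
  have HL : 0 < L by move: H3; rewrite -ltnNge; case: L {H1 H2} => //.
  have H4 : n' - t a.+3 < 3 * L by rewrite -ltnNge /n in H3.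
  by have [-> _] := straddle Ha Hn HL H1 H4 H2.
rewrite count_uniq_mem ?iota_uniq // mem_iota.
rewrite (_ : (1 <= t a < 1 + n') = true); last by apply/idP; have := t_pos a; lia.
rewrite muln1.
case: (boolP ((t a.+3 + 2 * t a <= n') && (n' <= t a.+3 + h a.+1))) => Hw.
  have Hp := window (n' := n') Ha Hw.
  move/andP: Hw => [Hw1 Hw2].
  have Ha3 : a <= a.+3 by lia.
  have := t_le Ha3; have := hS a => ? ?.
  rewrite Hp (_ : 3 * t a <= n' = true); last by apply/idP; lia.
  by rewrite (_ : 3 * t a <= n = false) //; apply/negbTE; rewrite -ltnNge /n; lia.
case E: (_ && _) => //.
move/andP: E => [/andP [H1 H2] H3].
have HL := t_pos a.
have H4 : n' - t a.+3 < 3 * t a by rewrite -ltnNge /n in H3.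
by have [_ Hw'] := straddle Ha Hn HL H1 H4 H2; rewrite Hw' in Hw.
Qed.

Lemma GammaE k : Gamma k.+2 = iota (h k.+1).+1 (t k.+1).
Proof.
rewrite /Gamma.
have H1 := h_closed k.
have H2 := h_closed k.+1.
have H3 := hS k.+1.
rewrite (_ : k.+2 - 2 = k); last lia.
rewrite (_ : k.+2 - 1 = k.+1); last lia.
congr iota; lia.
Qed.

Lemma GammaE' k : 0 < k -> Gamma k.+1 = iota (h k).+1 (t k).
Proof. by case: k => // k _; rewrite GammaE. Qed.

Lemma nth_E A B C j :
  nth 0 (nseq A 0 ++ nseq B 1 ++ nseq C 0) j = ((A <= j) && (j < A + B)).
Proof.
rewrite !nth_cat !size_nseq !nth_nseq.
case: (ltnP j A) => H1 /=; first by [].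
case: (ltnP (j - A) B) => H2 /=.
  by rewrite (_ : (j < A + B) = true) //; apply/idP; lia.
by rewrite if_same (_ : (j < A + B) = false) //; apply/negbTE; rewrite -leqNgt; lia.
Qed.

Lemma general m : 10 <= m ->
     let U := dV (Gamma (m - 3)) ++ dV (Gamma (m - 2)) ++ dV (Gamma (m - 1)) in
     let E := nseq ((5 * t (m - 4) + 1 - t (m - 2)) %/ 2) 0
              ++ nseq ((t (m - 2) - 3 * t (m - 4) - 1) %/ 2) 1
              ++ nseq (t (m - 2) + t (m - 3)) 0 in
     size E = size U /\ dV (Gamma m) = vadd U E.
Proof.
move=> Hm.
have [a Ea] : exists a, m = a + 4 by exists (m - 4); lia.
move=> U E; rewrite /U /E; clear U E.
have Ha : 6 <= a by lia.
rewrite (_ : m - 4 = a); last lia.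
rewrite (_ : m - 2 = a.+2); last lia.
rewrite (_ : m - 3 = a.+1); last lia.
rewrite (_ : m - 1 = a.+3); last lia.
rewrite (_ : Gamma m = Gamma a.+4); last by congr Gamma; lia.
set U := dV _ ++ _.
have Hc := h_closed a.-1.
rewrite (_ : a.-1.+1 = a) in Hc; last lia.
have Htr := t_rec a.-1.
rewrite (_ : a.-1.+1 = a) in Htr; last lia.
have Hlt2 := h_lt2t a.
have Hta : t a <= h a by apply: t_le_h; lia.
have Htr3 := t_rec a.
have Hh1 := hS a; have Hh2 := hS a.+1; have Hh3 := hS a.+2; have Hh33 := h3 a.
have EU : U = map d (iota (h a).+1 (t a + t a.+1 + t a.+2)).
  have Ha0 : 0 < a by lia.
  rewrite /U /dV -!map_cat !GammaE' //; congr map.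
  rewrite -addnA !iotaD (_ : (h a).+1 + t a = (h a.+1).+1); last lia.
  by rewrite (_ : (h a.+1).+1 + t a.+1 = (h a.+2).+1); last lia.
have HA : (5 * t a + 1 - t a.+2) %/ 2 = 2 * t a - h a - 1 by lia.
have HB : (t a.+2 - 3 * t a - 1) %/ 2 = h a + 1 - t a by lia.
rewrite HA HB.
set E := nseq _ 0 ++ _.
have HsE : size E = t a.+3 by rewrite /E !size_cat !size_nseq; lia.
have HsU : size U = t a.+3 by rewrite EU size_map size_iota; lia.
split; first by rewrite HsE HsU.
rewrite GammaE' /dV /vadd; last lia.
apply: (@eq_from_nth _ 0).
  by rewrite size_map size_iota size_map size_zip HsU HsE minnn.
move=> j; rewrite size_map size_iota => Hj.
rewrite (nth_map 0); last by rewrite size_iota.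
rewrite (nth_map (0, 0)); last by rewrite size_zip HsU HsE minnn.
rewrite nth_zip; last by rewrite HsU HsE.
rewrite /= nth_iota // EU (nth_map 0); last by rewrite size_iota; lia.
rewrite nth_iota; last lia.
rewrite /E nth_E.
have Hh4 := hS a.+3.
have Hn' : h a.+3 < (h a.+3).+1 + j <= h a.+4 by apply/andP; lia.
rewrite (drec Ha Hn').
congr (d _ + nat_of_bool _); first lia.
apply/idP/idP => /andP [H1 H2]; apply/andP; lia.
Qed.

Definition Tw (W : seq nat) z := nth 0 W z.-1.
Definition perbw W i L := all (fun z => Tw W z == Tw W (z + L)) (iota i L.*2).
Definition dw W n := count (fun L => (3 * L <= n) && perbw W (n.+1 - 3 * L) L) (iota 1 n).

Lemma dw_ok n : n <= t 11 -> d n = dw (S 11) n.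
Proof.
move=> Hn; rewrite dE /dw.
apply: eq_in_count => L; rewrite mem_iota => /andP [HL1 HL2].
change nat in L.
case: (leqP (3 * L) n) => H3 //=.
apply: eq_in_all => z; rewrite mem_iota => /andP [Hz1 Hz2].
change nat in z.
rewrite /Tw -!(Tk (k := 11)) //; lia.
Qed.

Lemma base0 : forall n, 0 < n <= 51 -> d n = 0.
Proof.
have H : all (fun n => dw (S 11) n == 0) (iota 1 51) by vm_compute.
move=> n Hn; rewrite dw_ok; last by rewrite (_ : t 11 = 927) //; lia.
apply/eqP; move/allP: H; apply; rewrite mem_iota; lia.
Qed.

Lemma dV_ok a b : a + b <= 928 -> dV (iota a b) = map (dw (S 11)) (iota a b).
Proof.
move=> H; apply/eq_in_map => n; rewrite mem_iota => /andP [H1 H2].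
change nat in n.
apply: dw_ok; rewrite (_ : t 11 = 927) //; lia.
Qed.

Lemma G7 : Gamma 7 = iota 52 (95 - 52 + 1). Proof. by vm_compute. Qed.
Lemma G8 : Gamma 8 = iota 96 (176 - 96 + 1). Proof. by vm_compute. Qed.
Lemma G9 : Gamma 9 = iota 177 (325 - 177 + 1). Proof. by vm_compute. Qed.

Lemma D7 : dV (Gamma 7) = nseq 6 0 ++ [:: 1] ++ nseq 37 0.
Proof. by rewrite G7 dV_ok //; vm_compute. Qed.

Lemma D8 : dV (Gamma 8) = nseq 11 0 ++ [:: 1; 1] ++ nseq 30 0 ++ [:: 1] ++ nseq 37 0.
Proof. by rewrite G8 dV_ok //; vm_compute. Qed.

Lemma D9 : dV (Gamma 9) = nseq 20 0 ++ nseq 4 1 ++ nseq 6 0 ++ [:: 1] ++ nseq 48 0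
                 ++ [:: 1; 1] ++ nseq 30 0 ++ [:: 1] ++ nseq 37 0.
Proof. by rewrite G9 dV_ok //; vm_compute. Qed.

Theorem mainTheorem8 :
  (forall n, 0 < n <= 51 -> d n = 0) /\
  Gamma 7 = iota 52 (95 - 52 + 1) /\
  dV (Gamma 7) = nseq 6 0 ++ [:: 1] ++ nseq 37 0 /\
  Gamma 8 = iota 96 (176 - 96 + 1) /\
  dV (Gamma 8) = nseq 11 0 ++ [:: 1; 1] ++ nseq 30 0 ++ [:: 1] ++ nseq 37 0 /\
  Gamma 9 = iota 177 (325 - 177 + 1) /\
  dV (Gamma 9) = nseq 20 0 ++ nseq 4 1 ++ nseq 6 0 ++ [:: 1] ++ nseq 48 0
                 ++ [:: 1; 1] ++ nseq 30 0 ++ [:: 1] ++ nseq 37 0 /\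
  (forall m, 10 <= m ->
     let U := dV (Gamma (m - 3)) ++ dV (Gamma (m - 2)) ++ dV (Gamma (m - 1)) in
     let E := nseq ((5 * t (m - 4) + 1 - t (m - 2)) %/ 2) 0
              ++ nseq ((t (m - 2) - 3 * t (m - 4) - 1) %/ 2) 1
              ++ nseq (t (m - 2) + t (m - 3)) 0 in
     size E = size U /\ dV (Gamma m) = vadd U E).
Proof.
split; first exact: base0.
split; first exact: G7.
split; first exact: D7.
split; first exact: G8.
split; first exact: D8.
split; first exact: G9.
split; first exact: D9.
exact: general.
Qed.
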